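(* Let $P\subseteq\mathbb R^n$ be a finite set, let $\alpha_0,\epsilon\ge0$, and let $P_0,P_1,\dots,P_m$ be finite sets with $P_0=P$ and, for each $k=0,\dots,m-1$, $P_{k+1}$ an $\alpha_0\epsilon^2(1+\epsilon)^{k-1}$-net of $P_k$. Then for every $k=0,\dots,m-1$, $$U(P;\alpha_0(1+\epsilon)^k)\subseteq U(P_{k+1};\alpha_0(1+\epsilon)^{k+1}).$$
   Context: For $\delta\ge0$, a subset $P'\subseteq Q$ is a $\delta$-net of $Q$ if (1) for every $q\in Q$ there is $q'\in P'$ with $\|q-q'\|\le\delta$, and (2) any two distinct $p,q\in P'$ satisfy $\|p-q\|>\delta$. For a finite $S\subseteq\mathbb R^n$ and $r\ge0$, $U(S;r)=\bigcup_{s\in S}B(s;r)$, where $B(s;r)$ is the open Euclidean ball of radius $r$ about $s$ for $r>0$, and $B(s;0)=\{s\}$. *)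

(* Defs.v *)
From HB Require Import structures.
From mathcomp Require Import all_boot all_order all_algebra.
From mathcomp Require Import reals.
Set Implicit Arguments. Unset Strict Implicit. Unset Printing Implicit Defensive.
Import Order.TTheory GRing.Theory Num.Theory.
Local Open Scope ring_scope.

Definition edist (R : realType) (n : nat) (x y : 'rV[R]_n) : R :=
  Num.sqrt (\sum_(i < n) (x ord0 i - y ord0 i) ^+ 2).

(* x \in B(s; r): open ball for r > 0, the singleton {s} for r = 0
   (only used with r >= 0). *)
Definition inBall (R : realType) (n : nat) (s : 'rV[R]_n) (r : R) (x : 'rV[R]_n) : Prop :=
  if 0 < r then edist s x < r else x == s.

Definition inU (R : realType) (n : nat) (S : seq 'rV[R]_n) (r : R) (x : 'rV[R]_n) : Prop :=
  exists2 s, s \in S & inBall s r x.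

Definition is_net (R : realType) (n : nat) (delta : R) (P' Q : seq 'rV[R]_n) : Prop :=
  {subset P' <= Q} /\
  (forall q, q \in Q -> exists2 q', q' \in P' & edist q q' <= delta) /\
  (forall p q, p \in P' -> q \in P' -> p <> q -> delta < edist p q).

(* Main.v *)
Require Import Defs.
From HB Require Import structures.
From mathcomp Require Import all_boot all_order all_algebra.
From mathcomp Require Import reals ring lra zify.
Import Order.TTheory GRing.Theory Num.Theory.
Local Open Scope ring_scope.

Lemma CS (R : realType) (n : nat) (a b : 'I_n -> R) :
  (\sum_i a i * b i) ^+ 2 <= (\sum_i a i ^+ 2) * (\sum_i b i ^+ 2).
Proof.
set A := \sum_i a i ^+ 2; set B := \sum_i b i ^+ 2; set C := \sum_i a i * b i.
have A0 : 0 <= A by apply: sumr_ge0 => i _; exact: sqr_ge0.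
have B0 : 0 <= B by apply: sumr_ge0 => i _; exact: sqr_ge0.
have [Ae|Ane] := eqVneq A 0.
  have ai : forall i, a i = 0.
    move=> i; apply/eqP; rewrite -sqrf_eq0.
    apply/eqP; apply: (psumr_eq0P _ Ae) => // j _; exact: sqr_ge0.
  have -> : C = 0 by rewrite /C big1 // => i _; rewrite ai mul0r.
  by rewrite expr0n /= mulr_ge0.
have Apos : 0 < A by rewrite lt_def Ane A0.
have H : 0 <= \sum_i (a i * C - b i * A) ^+ 2 by apply: sumr_ge0 => i _; exact: sqr_ge0.
have E : \sum_i (a i * C - b i * A) ^+ 2 = C ^+ 2 * A - (2 * C * A) * C + A ^+ 2 * B.
  transitivity (\sum_i (C ^+ 2 * a i ^+ 2 - (2 * C * A) * (a i * b i) + A ^+ 2 * b i ^+ 2)).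
    by apply: eq_bigr => i _; ring.
  by rewrite big_split /= sumrB -!mulr_sumr.
rewrite E in H; nra.
Qed.

Lemma edist_triangle (R : realType) (n : nat) (x y z : 'rV[R]_n) :
  edist x z <= edist x y + edist y z.
Proof.
rewrite /edist.
set A := \sum_i (x ord0 i - y ord0 i) ^+ 2.
set B := \sum_i (y ord0 i - z ord0 i) ^+ 2.
have A0 : 0 <= A by apply: sumr_ge0 => i _; exact: sqr_ge0.
have B0 : 0 <= B by apply: sumr_ge0 => i _; exact: sqr_ge0.
have hC := @CS _ _ (fun i => x ord0 i - y ord0 i) (fun i => y ord0 i - z ord0 i).
set C := \sum_i _ in hC.
have E : \sum_i (x ord0 i - z ord0 i) ^+ 2 = A + 2 * C + B.
  transitivity (\sum_i ((x ord0 i - y ord0 i) ^+ 2 + 2 * ((x ord0 i - y ord0 i) * (y ord0 i - z ord0 i)) + (y ord0 i - z ord0 i) ^+ 2)).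
    by apply: eq_bigr => i _; ring.
  by rewrite !big_split /= -mulr_sumr.
rewrite E.
have sA := sqrtr_ge0 A; have sB := sqrtr_ge0 B.
rewrite -(ger0_norm (addr_ge0 sA sB)) -sqrtr_sqr ler_sqrt; last exact: sqr_ge0.
have hA := sqr_sqrtr A0; have hB := sqr_sqrtr B0.
have hCle : C <= Num.sqrt A * Num.sqrt B.
  have h : C ^+ 2 <= (Num.sqrt A * Num.sqrt B) ^+ 2 by rewrite exprMn hA hB.
  have s0 := mulr_ge0 sA sB.
  move: h s0; move: (Num.sqrt A * Num.sqrt B) => s h s0.
  rewrite leNgt; apply/negP => Cs.
  have : s * s < C * C by apply: ltr_pM => //; exact: le_trans s0 (ltW Cs).
  by rewrite -!expr2 ltNge h.
nra.
Qed.

Lemma edist_sym (R : realType) (n : nat) (x y : 'rV[R]_n) : edist x y = edist y x.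
Proof. by rewrite /edist; congr Num.sqrt; apply: eq_bigr => i _; ring. Qed.

Lemma edist_ge0 (R : realType) (n : nat) (x y : 'rV[R]_n) : 0 <= edist x y.
Proof. exact: sqrtr_ge0. Qed.

Lemma edist_xx (R : realType) (n : nat) (x : 'rV[R]_n) : edist x x = 0.
Proof. by rewrite /edist big1 ?sqrtr0 // => i _; rewrite subrr expr0n. Qed.

Lemma edist_eq0 (R : realType) (n : nat) (x y : 'rV[R]_n) : edist x y <= 0 -> x = y.
Proof.
move=> h; have : edist x y == 0 by rewrite eq_le h edist_ge0.
rewrite /edist sqrtr_eq0 => hs.
have H0 : \sum_i (x ord0 i - y ord0 i) ^+ 2 == 0.
  by rewrite eq_le hs; apply: sumr_ge0 => i _; exact: sqr_ge0.
apply/rowP => i; apply/eqP; rewrite -subr_eq0 -sqrf_eq0; apply/eqP.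
by apply: (psumr_eq0P _ (eqP H0)) => // j _; exact: sqr_ge0.
Qed.
Import Order.TTheory GRing.Theory Num.Theory.
Local Open Scope ring_scope.

Theorem lemma19 (R : realType) (n : nat) (P : seq 'rV[R]_n) (alpha0 eps : R)
  (m : nat) (Ps : nat -> seq 'rV[R]_n) :
  0 <= alpha0 -> 0 <= eps ->
  Ps 0%N = P ->
  (forall k : nat, (k < m)%N ->
     is_net (alpha0 * eps ^+ 2 * (1 + eps) ^ (k%:Z - 1)) (Ps k.+1) (Ps k)) ->
  forall k : nat, (k < m)%N ->
    forall x : 'rV[R]_n,
      inU P (alpha0 * (1 + eps) ^+ k) x ->
      inU (Ps k.+1) (alpha0 * (1 + eps) ^+ k.+1) x.
Proof.
move=> a0 e0 HP0 Hnet.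
have e1 : 0 < 1 + eps by rewrite ltr_pwDl.
have u1 : (1 + eps) \is a GRing.unit by rewrite unitfE gt_eqF.
have claim : forall j, (j <= m)%N -> forall p, p \in P ->
    exists2 q, q \in Ps j & edist p q <= alpha0 * eps * (1 + eps) ^ (j%:Z - 1).
  elim=> [|j IH] Hj p Hp.
    exists p; first by rewrite HP0.
    by rewrite edist_xx; apply: mulr_ge0; [exact: mulr_ge0|exact: exprz_ge0 (ltW e1)].
  have Hjm : (j < m)%N by [].
  have [q Hq Hpq] := IH (ltnW Hjm) p Hp.
  have [_ [Hcov _]] := Hnet j Hjm.
  have [q' Hq' Hqq'] := Hcov q Hq.
  exists q' => //.
  have -> : (j.+1)%:Z - 1 = (j%:Z - 1) + 1 by lia.
  rewrite exprzDr // expr1z.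
  have X0 : 0 <= (1 + eps) ^ (j%:Z - 1) by exact: exprz_ge0 (ltW e1).
  move: Hpq Hqq' X0; move: ((1 + eps) ^ (j%:Z - 1)) => X Hpq Hqq' X0.
  apply: le_trans (@edist_triangle _ _ p q q') _.
  have -> : alpha0 * eps * (X * (1 + eps)) = alpha0 * eps * X + alpha0 * eps ^+ 2 * X by ring.
  exact: lerD.
move=> k Hk x [p Hp Hb].
have [q Hq Hpq] := claim k.+1 Hk p Hp.
have E : (k.+1)%:Z - 1 = k%:Z by lia.
rewrite E /= in Hpq.
exists q => //.
move: Hb; rewrite /inBall.
have Xk : 0 < (1 + eps) ^+ k by exact: exprn_gt0.
have [a0p|] := ltP 0 alpha0.
  rewrite !mulr_gt0 ?exprn_gt0 // => Hpx.
  apply: le_lt_trans (@edist_triangle _ _ q p x) _.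
  rewrite (@edist_sym _ _ q p) exprS.
  have -> : alpha0 * ((1 + eps) * (1 + eps) ^+ k) = alpha0 * eps * (1 + eps) ^+ k + alpha0 * (1 + eps) ^+ k by ring.
  exact: ler_ltD.
move=> a0n; have a00 : alpha0 = 0 by apply/eqP; rewrite eq_le a0n a0.
rewrite a00 !mul0r ltxx => /eqP ->.
apply/eqP; apply: edist_eq0.
by rewrite a00 !mul0r in Hpq.
Qed.
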